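(* Let $S\subseteq\mathbb{N}^{\mathbb{N}}$. Consider the following game: Alice fixes a sequence $f\in\mathbb{N}^{\mathbb{N}}$ (she has no information). At the start, Bob chooses a countable set $\Sigma$ of symbols of $\mathscr{L}_{\max}$ and a listing $\phi_0,\phi_1,\dots$ of all quantifier-free sentences of $\mathscr{L}_{\max}\cap\Sigma$; then on his $n$th move Bob is told the value $f(\phi_n)$ (and nothing else about $f$), and plays a natural number $b_n$ depending only on $f(\phi_0),\dots,f(\phi_n)$. Bob wins if either $f\in S$ and $b_n=1$ for all sufficiently large $n$, or $f\notin S$ and $b_n=0$ for all sufficiently large $n$. Then Bob has a winning strategy if and only if $S$ is guessable, i.e. there is $G:\mathbb{N}^{<\mathbb{N}}\to\mathbb{N}$ such that for every $f\in\mathbb{N}^{\mathbb{N}}$, $\lim_{n\to\infty}G(f(0),\dots,f(n))$ equals $1$ if $f\in S$ and $0$ if $f\notin S$.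
   Context: The language $\mathscr{L}_{\max}$ is the first-order language (with equality) having: a constant symbol $\overline{n}$ for each $n\in\mathbb{N}$; an $n$-ary function symbol $\tilde w$ for each $w:\mathbb{N}^n\to\mathbb{N}$; an $n$-ary predicate symbol $\tilde p$ for each $p\subseteq\mathbb{N}^n$; a special unary function symbol $\mathbf{f}$; and, for every $n$ and every $G:\mathbb{N}^n\times\mathbb{N}^{<\mathbb{N}}\to\mathbb{N}$, an $(n+1)$-ary function symbol $G\circ\mathbf{f}$. For $f\in\mathbb{N}^{\mathbb{N}}$, $\mathscr{M}_f$ is the structure with universe $\mathbb{N}$ interpreting $\overline n$ as $n$, $\tilde w$ as $w$, $\tilde p$ as $p$, $\mathbf f$ as $f$, and $G\circ\mathbf f$ as $(m_1,\dots,m_n,m)\mapsto G(m_1,\dots,m_n,f(0),\dots,f(m))$. For a sentence $\phi$, $f(\phi)=1$ if $\mathscr{M}_f\models\phi$ and $f(\phi)=0$ otherwise. ''Quantifier-free'' means containing no quantifiers at all (not even bounded ones). For a set $\Sigma$ of symbols of $\mathscr{L}_{\max}$, a sentence ''of $\mathscr{L}_{\max}\cap\Sigma$'' is an $\mathscr{L}_{\max}$-sentence all of whose non-logical symbols lie in $\Sigma$. *)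

(* Defs.v *)
From mathcomp Require Import all_boot.
Set Implicit Arguments.
Unset Strict Implicit.
Unset Printing Implicit Defensive.

Definition prefix (f : nat -> nat) (n : nat) : seq nat := [seq f i | i <- iota 0 n.+1].

(* Coerce a list of naturals to a k-tuple (exact when the size is k). *)
Definition tup (k : nat) (s : seq nat) : k.-tuple nat := insubd (nseq_tuple k 0) s.

(* N^k is represented by k.-tuple nat; subsets of N^k by boolean predicates
   (characteristic functions); N^{<N} by seq nat. *)
Inductive symbol : Type :=
| SConst (n : nat)
| SFun (k : nat) (w : k.-tuple nat -> nat)
| SPred (k : nat) (p : pred (k.-tuple nat))
| SF
| SGf (k : nat) (G : k.-tuple nat -> seq nat -> nat).     (* G o \mathbf f, arity k+1 *)

(* Closed terms (quantifier-free sentences contain no variables at all). *)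
Inductive term : Type :=
| tconst (n : nat)
| tfun (k : nat) (w : k.-tuple nat -> nat) (args : seq term)
| tf (t : term)
| tGf (k : nat) (G : k.-tuple nat -> seq nat -> nat) (args : seq term) (t : term).

Inductive qfsent : Type :=
| sbot
| seqt (t1 t2 : term)
| spred (k : nat) (p : pred (k.-tuple nat)) (args : seq term)
| sneg (a : qfsent)
| sand (a b : qfsent)
| sor (a b : qfsent)
| simp (a b : qfsent).

Fixpoint wf_term (t : term) : bool :=
  match t with
  | tconst _ => true
  | tfun k _ args => (size args == k) && all wf_term args
  | tf t => wf_term t
  | tGf k _ args t => [&& size args == k, all wf_term args & wf_term t]
  end.

Fixpoint wf_sent (a : qfsent) : bool :=
  match a with
  | sbot => true
  | seqt t1 t2 => wf_term t1 && wf_term t2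
  | spred k _ args => (size args == k) && all wf_term args
  | sneg a => wf_sent a
  | sand a b | sor a b | simp a b => wf_sent a && wf_sent b
  end.

Fixpoint allProp (T : Type) (P : T -> Prop) (l : seq T) : Prop :=
  match l with [::] => True | u :: l' => P u /\ allProp P l' end.

Fixpoint term_in (Sigma : symbol -> Prop) (t : term) : Prop :=
  match t with
  | tconst n => Sigma (SConst n)
  | tfun k w args => Sigma (SFun w) /\ allProp (term_in Sigma) args
  | tf t => Sigma SF /\ term_in Sigma t
  | tGf k G args t => [/\ Sigma (SGf G), allProp (term_in Sigma) args & term_in Sigma t]
  end.

Fixpoint sent_in (Sigma : symbol -> Prop) (a : qfsent) : Prop :=
  match a with
  | sbot => True
  | seqt t1 t2 => term_in Sigma t1 /\ term_in Sigma t2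
  | spred k p args => Sigma (SPred p) /\ allProp (term_in Sigma) args
  | sneg a => sent_in Sigma a
  | sand a b | sor a b | simp a b => sent_in Sigma a /\ sent_in Sigma b
  end.

Fixpoint evalt (f : nat -> nat) (t : term) : nat :=
  match t with
  | tconst n => n
  | tfun k w args => w (tup k (map (evalt f) args))
  | tf t => f (evalt f t)
  | tGf k G args t => G (tup k (map (evalt f) args)) (prefix f (evalt f t))
  end.

Fixpoint holds (f : nat -> nat) (a : qfsent) : bool :=
  match a with
  | sbot => false
  | seqt t1 t2 => evalt f t1 == evalt f t2
  | spred k p args => p (tup k (map (evalt f) args))
  | sneg a => ~~ holds f a
  | sand a b => holds f a && holds f b
  | sor a b => holds f a || holds f b
  | simp a b => holds f a ==> holds f b
  end.

Definition fval (f : nat -> nat) (a : qfsent) : nat := nat_of_bool (holds f a).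

Definition countable_set (Sigma : symbol -> Prop) : Prop :=
  exists e : nat -> symbol, forall s, Sigma s -> exists n, e n = s.

Definition lists_qf_sentences (Sigma : symbol -> Prop) (phi : nat -> qfsent) : Prop :=
  (forall n, wf_sent (phi n) /\ sent_in Sigma (phi n)) /\
  (forall a, wf_sent a -> sent_in Sigma a -> exists n, phi n = a).

Definition eventually (P : nat -> Prop) : Prop := exists N, forall n, N <= n -> P n.

Definition bob_wins (S : (nat -> nat) -> Prop) : Prop :=
  exists (Sigma : symbol -> Prop) (phi : nat -> qfsent) (B : seq nat -> nat),
    countable_set Sigma /\ lists_qf_sentences Sigma phi /\
    forall f : nat -> nat,
      let b := fun n => B [seq fval f (phi i) | i <- iota 0 n.+1] in
      (S f /\ eventually (fun n => b n = 1)) \/ (~ S f /\ eventually (fun n => b n = 0)).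

Definition guessable (S : (nat -> nat) -> Prop) : Prop :=
  exists G : seq nat -> nat, forall f : nat -> nat,
    (S f -> eventually (fun n => G (prefix f n) = 1)) /\
    (~ S f -> eventually (fun n => G (prefix f n) = 0)).

(* Main.v *)
Require Import Defs.
From mathcomp Require Import all_boot.
From Stdlib Require Import Eqdep_dec PeanoNat Classical.

Inductive code := cbot | ceq (d1 n1 d2 n2 : nat) | cneg (c:code) | cand (a b:code) | cor (a b:code) | cimp (a b : code).
Fixpoint decT (t : GenTree.tree nat) : code :=
  match t with
  | GenTree.Node 1 [:: GenTree.Leaf d1; GenTree.Leaf n1; GenTree.Leaf d2; GenTree.Leaf n2] => ceq d1 n1 d2 n2
  | GenTree.Node 2 [:: a] => cneg (decT a)
  | GenTree.Node 3 [:: a; b] => cand (decT a) (decT b)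
  | GenTree.Node 4 [:: a; b] => cor (decT a) (decT b)
  | GenTree.Node 5 [:: a; b] => cimp (decT a) (decT b)
  | _ => cbot end.
Fixpoint encT (c : code) : GenTree.tree nat :=
  match c with
  | cbot => GenTree.Node 0 [::]
  | ceq d1 n1 d2 n2 => GenTree.Node 1 [:: GenTree.Leaf d1; GenTree.Leaf n1; GenTree.Leaf d2; GenTree.Leaf n2]
  | cneg a => GenTree.Node 2 [:: encT a]
  | cand a b => GenTree.Node 3 [:: encT a; encT b]
  | cor a b => GenTree.Node 4 [:: encT a; encT b]
  | cimp a b => GenTree.Node 5 [:: encT a; encT b]
  end.
Lemma encTK c : decT (encT c) = c.
Proof. by elim: c => //= [a -> | a -> b -> | a -> b -> | a -> b ->]. Qed.

Fixpoint loop (idx : nat -> nat) (n j : nat) : nat :=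
  match j with 0 => 0 | j'.+1 => if idx j <= n then j else loop idx n j' end.

Lemma loopP idx n K j : K <= j -> idx K <= n -> K <= loop idx n j /\ idx (loop idx n j) <= n.
Proof.
elim: j => [|j IH] /=.
  rewrite leqn0 => /eqP -> hi; split; [exact: leq0n | exact: hi].
case: ifP => [h|h] hK hi; first by split; [exact: hK | exact: h].
have ne: K != j.+1 by apply/eqP => E; rewrite -E hi in h.
apply: IH hi; by rewrite -ltnS ltn_neqAle ne hK.
Qed.

Section P1.
Variable G : seq nat -> nat.
Definition G0 : 0.-tuple nat -> seq nat -> nat := fun _ s => G s.
Definition Sig (s : symbol) : Prop := s = SGf G0 \/ exists n, s = SConst n.
Definition Tm (d n : nat) : term := iter d (fun t => tGf G0 [::] t) (tconst n).
Fixpoint tcode (t : term) : nat * nat :=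
  match t with
  | tconst n => (0, n)
  | tGf _ _ _ t => ((tcode t).1.+1, (tcode t).2)
  | _ => (0, 0) end.
Fixpoint cdec (c : code) : qfsent :=
  match c with
  | cbot => sbot
  | ceq d1 n1 d2 n2 => seqt (Tm d1 n1) (Tm d2 n2)
  | cneg a => sneg (cdec a)
  | cand a b => sand (cdec a) (cdec b)
  | cor a b => sor (cdec a) (cdec b)
  | cimp a b => simp (cdec a) (cdec b) end.
Fixpoint cenc (a : qfsent) : code :=
  match a with
  | seqt t1 t2 => ceq (tcode t1).1 (tcode t1).2 (tcode t2).1 (tcode t2).2
  | sneg a => cneg (cenc a)
  | sand a b => cand (cenc a) (cenc b)
  | sor a b => cor (cenc a) (cenc b)
  | simp a b => cimp (cenc a) (cenc b)
  | _ => cbot end.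

Lemma tcodeK t : wf_term t -> term_in Sig t -> Tm (tcode t).1 (tcode t).2 = t.
Proof.
elim: t => //=.
- by move=> k w args _ [[H|[n H]] _].
- by move=> t _ _ [[H|[n H]] _].
- move=> k G1 args t IH /and3P [/eqP Hs _ Hw] [[H|[n H]] _ Ht] //.
  move: H Hs; case=> Hk; subst k => H1 Hs.
  rewrite (inj_pair2_eq_dec _ Nat.eq_dec _ _ _ _ H1).
  by case: args Hs => // _; rewrite -/(Tm _ _) IH.
Qed.

Lemma cencK a : wf_sent a -> sent_in Sig a -> cdec (cenc a) = a.
Proof.
elim: a => //=.
- by move=> t1 t2 /andP [h1 h2] [i1 i2]; rewrite !tcodeK.
- by move=> k p args _ [[H|[n H]] _].
- by move=> a IH h i; rewrite IH.
- by move=> a IHa b IHb /andP [h1 h2] [i1 i2]; rewrite IHa // IHb.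
- by move=> a IHa b IHb /andP [h1 h2] [i1 i2]; rewrite IHa // IHb.
- by move=> a IHa b IHb /andP [h1 h2] [i1 i2]; rewrite IHa // IHb.
Qed.

Lemma Tm_ok d n : wf_term (Tm d n) /\ term_in Sig (Tm d n).
Proof.
elim: d => [|d [h1 h2]] /=; first by split => //; right; exists n.
by split; [rewrite h1 | split => //; left].
Qed.

Lemma cdec_ok c : wf_sent (cdec c) /\ sent_in Sig (cdec c).
Proof.
elim: c => //=.
- by move=> d1 n1 d2 n2; case: (Tm_ok d1 n1) => -> ?; case: (Tm_ok d2 n2) => -> ?.
- by move=> a [h i] b [h' i']; rewrite h h'.
- by move=> a [h i] b [h' i']; rewrite h h'.
- by move=> a [h i] b [h' i']; rewrite h h'.
Qed.

Definition phi (n : nat) : qfsent :=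
  cdec (match @unpickle (GenTree.tree nat) n with Some t => decT t | None => cbot end).

Lemma phi_pick c : phi (pickle (encT c)) = cdec c.
Proof. by rewrite /phi pickleK encTK. Qed.

Definition psi (m : nat) : qfsent := seqt (tGf G0 [::] (tconst m)) (tconst 1).
Lemma idx_ex m : {i : nat | phi i = psi m}.
Proof.
exists (pickle (encT (cenc (psi m)))).
rewrite phi_pick cencK //=.
split; [split; [by left | done | by right; exists m] | by right; exists 1].
Qed.
Definition idx (m : nat) : nat := proj1_sig (idx_ex m).
Lemma phi_idx m : phi (idx m) = psi m.
Proof. exact: (proj2_sig (idx_ex m)). Qed.

Definition Bs (s : seq nat) : nat := let n := (size s).-1 in nth 0 s (idx (loop idx n n)).

End P1.

Lemma part1 S : guessable S -> bob_wins S.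
Proof.
case=> G HG.
exists (Sig G), (phi G), (Bs G); split.
  exists (fun n => if n is n'.+1 then SConst n' else SGf (G0 G)) => s [->|[n ->]].
    by exists 0.
  by exists n.+1.
split.
  split; first by move=> n; apply: cdec_ok.
  by move=> a h i; exists (pickle (encT (cenc a))); rewrite phi_pick cencK.
move=> f /=.
have key : forall c N, (forall n, N <= n -> G (Defs.prefix f n) = c) -> c <= 1 ->
   eventually (fun n => Bs G [seq fval f (phi G i) | i <- iota 0 n.+1] = c).
  move=> c N HN hc.
  exists (maxn N (idx G N)) => n; rewrite geq_max => /andP [h1 h2].
  rewrite /Bs size_map size_iota -pred_Sn.
  have [l1 l2] := loopP (idx G) n N n h1 h2.
  rewrite (nth_map 0) ?size_iota ?ltnS // nth_iota ?ltnS // add0n phi_idx.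
  have -> : fval f (psi G (loop (idx G) n n)) = (G (Defs.prefix f (loop (idx G) n n)) == 1) :> nat by [].
  rewrite HN; last by apply: leq_trans l1.
  by case: c hc {HN} => [|[|]].
case: (HG f) => H1 H2.
case: (classic (S f)) => Sf.
  left; split => //; case: (H1 Sf) => N HN; exact: key HN _.
right; split => //; case: (H2 Sf) => N HN; exact: key HN _.
Qed.

Definition term_ind' (P : term -> Prop)
  (Hc : forall n, P (tconst n))
  (Hfun : forall k w args, allProp P args -> P (@tfun k w args))
  (Hf : forall t, P t -> P (tf t))
  (HG : forall k G args t, allProp P args -> P t -> P (@tGf k G args t)) :
  forall t, P t :=
  fix rec t := match t return P t with
  | tconst n => Hc n
  | @tfun k w args => Hfun k w args ((fix go l : allProp P l :=
        match l with [::] => I | u :: l' => conj (rec u) (go l') end) args)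
  | tf t => Hf t (rec t)
  | @tGf k G args t => HG k G args t ((fix go l : allProp P l :=
        match l with [::] => I | u :: l' => conj (rec u) (go l') end) args) (rec t)
  end.

Fixpoint olist (l : seq (option nat)) : option (seq nat) :=
  match l with
  | [::] => Some [::]
  | o :: l' => match o, olist l' with Some v, Some vs => Some (v :: vs) | _, _ => None end
  end.

Fixpoint evp (s : seq nat) (t : term) : option nat :=
  match t with
  | tconst n => Some n
  | tfun k w args => omap (fun vs => w (tup k vs)) (olist (map (evp s) args))
  | tf t => match evp s t with Some v => if v < size s then Some (nth 0 s v) else None | None => None end
  | tGf k G args t =>
     match olist (map (evp s) args), evp s t with
     | Some vs, Some v => if v < size s then Some (G (tup k vs) (take v.+1 s)) else None
     | _, _ => None end
  end.

Fixpoint holdsp (s : seq nat) (a : qfsent) : option bool :=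
  match a with
  | sbot => Some false
  | seqt t1 t2 => match evp s t1, evp s t2 with Some x, Some y => Some (x == y) | _, _ => None end
  | spred k p args => omap (fun vs => p (tup k vs)) (olist (map (evp s) args))
  | sneg a => omap negb (holdsp s a)
  | sand a b => match holdsp s a, holdsp s b with Some x, Some y => Some (x && y) | _, _ => None end
  | sor a b => match holdsp s a, holdsp s b with Some x, Some y => Some (x || y) | _, _ => None end
  | simp a b => match holdsp s a, holdsp s b with Some x, Some y => Some (x ==> y) | _, _ => None end
  end.

Section P2.
Variable f : nat -> nat.

Definition good {A : Type} (e : seq nat -> option A) (v : A) : Prop :=
  (forall n w, e (Defs.prefix f n) = Some w -> w = v) /\
  (exists N, forall n, N <= n -> e (Defs.prefix f n) = Some v).

Lemma size_prefix n : size (Defs.prefix f n) = n.+1.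
Proof. by rewrite /Defs.prefix size_map size_iota. Qed.

Lemma nth_prefix n v : v < n.+1 -> nth 0 (Defs.prefix f n) v = f v.
Proof. by move=> h; rewrite /Defs.prefix (nth_map 0) ?size_iota // nth_iota. Qed.

Lemma take_prefix n v : v < n.+1 -> take v.+1 (Defs.prefix f n) = Defs.prefix f v.
Proof. by move=> h; rewrite /Defs.prefix -map_take take_iota (minn_idPl h). Qed.

Lemma olist_good args :
  allProp (fun t => good (fun s => evp s t) (evalt f t)) args ->
  good (fun s => olist (map (evp s) args)) (map (evalt f) args).
Proof.
elim: args => [|t l IH] /=.
  by split; [move=> n w [<-] | exists 0].
case=> [[s1 [N1 e1]] /IH [s2 [N2 e2]]]; split.
  move=> n w; case E1: (evp _ t) => [x|] //; case E2: olist => [xs|] // [<-].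
  by rewrite (s1 _ _ E1) (s2 _ _ E2).
exists (maxn N1 N2) => n; rewrite geq_max => /andP [h1 h2].
by rewrite e1 // e2.
Qed.

Lemma evp_good t : good (fun s => evp s t) (evalt f t).
Proof.
elim/term_ind': t => /=.
- by move=> n; split; [move=> n0 w [<-] | exists 0].
- move=> k w args /olist_good [s1 [N e]]; split.
    by move=> n v; case E: olist => [xs|] // [<-]; rewrite (s1 _ _ E).
  by exists N => n h; rewrite e.
- move=> t [s1 [N e]]; split.
    move=> n v; case E: evp => [x|] //; rewrite size_prefix; case: ifP => // h [<-].
    by move: h; rewrite (s1 _ _ E) => h; rewrite nth_prefix.
  exists (maxn N (evalt f t)) => n; rewrite geq_max => /andP [h1 h2].
  by rewrite e // size_prefix ltnS h2 nth_prefix.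
- move=> k G args t /olist_good [s1 [N1 e1]] [s2 [N2 e2]]; split.
    move=> n v; case E1: olist => [xs|] //; case E2: evp => [x|] //.
    rewrite size_prefix; case: ifP => // h [<-].
    move: h; rewrite (s1 _ _ E1) (s2 _ _ E2) => h.
    by rewrite -(take_prefix _ _ h).
  exists (maxn (maxn N1 N2) (evalt f t)) => n; rewrite !geq_max => /andP [/andP [h1 h2] h3].
  by rewrite e1 // e2 // size_prefix ltnS h3 take_prefix.
Qed.

Lemma good2 {A B C : Type} (e1 : seq nat -> option A) (e2 : seq nat -> option B) (op : A -> B -> C) v1 v2 :
  good e1 v1 -> good e2 v2 ->
  good (fun s => match e1 s, e2 s with Some x, Some y => Some (op x y) | _, _ => None end) (op v1 v2).
Proof.
move=> [s1 [N1 h1]] [s2 [N2 h2]]; split.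
  move=> n w; case E1: (e1 _) => [x|] //; case E2: (e2 _) => [y|] // [<-].
  by rewrite (s1 _ _ E1) (s2 _ _ E2).
exists (maxn N1 N2) => n; rewrite geq_max => /andP [a b].
by rewrite h1 // h2.
Qed.

Lemma holdsp_good a : good (fun s => holdsp s a) (holds f a).
Proof.
elim: a => /=.
- by split; [move=> n0 w [<-] | exists 0].
- move=> t1 t2; exact (good2 _ _ (fun x y : nat => x == y) _ _ (evp_good t1) (evp_good t2)).
- move=> k p args.
  have /olist_good [s1 [N e]] : allProp (fun t => good (fun s => evp s t) (evalt f t)) args.
    by elim: args => //= t l IH; split; [apply: evp_good | exact: IH].
  split; last by exists N => n h; rewrite e.
  by move=> n v; case E: olist => [xs|] // [<-]; rewrite (s1 _ _ E).
- move=> a [s1 [N e]]; split; last by exists N => n h; rewrite e.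
  by move=> n v; case E: holdsp => [x|] // [<-]; rewrite (s1 _ _ E).
- by move=> a ha b hb; exact (good2 _ _ andb _ _ ha hb).
- by move=> a ha b hb; exact (good2 _ _ orb _ _ ha hb).
- by move=> a ha b hb; exact (good2 _ _ implb _ _ ha hb).
Qed.
End P2.

Fixpoint cnt (s : seq nat) (phi : nat -> qfsent) (fuel i : nat) : nat :=
  match fuel with
  | 0 => 0
  | fuel'.+1 => if holdsp s (phi i) is Some _ then (cnt s phi fuel' i.+1).+1 else 0
  end.

Lemma cnt_some s phi fuel j i : i < cnt s phi fuel j -> holdsp s (phi (j + i)) != None.
Proof.
elim: fuel j i => [|fuel IH] j i //=.
case E: holdsp => [x|] //; case: i => [|i]; first by rewrite addn0 E.
by rewrite ltnS => /IH; rewrite addSnnS.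
Qed.

Lemma cnt_ge s phi fuel j K : K <= fuel ->
  (forall i, i < K -> holdsp s (phi (j + i)) != None) -> K <= cnt s phi fuel j.
Proof.
elim: fuel j K => [|fuel IH] j K; first by rewrite leqn0 => /eqP ->.
case: K => [|K] // hK h /=.
have := h 0 isT; rewrite addn0; case: holdsp => // _ _.
rewrite ltnS; apply: IH => // i hi; rewrite addSnnS; exact: h.
Qed.

Definition Gs (phi : nat -> qfsent) (B : seq nat -> nat) (s : seq nat) : nat :=
  let k := cnt s phi (size s) 0 in
  if k is k'.+1 then B [seq nat_of_bool (odflt false (holdsp s (phi i))) | i <- iota 0 k] else 0.

Lemma part2 S : bob_wins S -> guessable S.
Proof.
case=> Sig [phi [B [_ [_ HB]]]].
exists (Gs phi B) => f.
have key : forall c, eventually (fun n => B [seq fval f (phi i) | i <- iota 0 n.+1] = c) ->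
    eventually (fun n => Gs phi B (Defs.prefix f n) = c).
  move=> c [M HM].
  have allg : forall K, exists N, forall n, N <= n -> forall i, i < K ->
      holdsp (Defs.prefix f n) (phi i) = Some (holds f (phi i)).
    elim=> [|K [N IH]]; first by exists 0.
    have [_ [N' e]] := holdsp_good f (phi K).
    exists (maxn N N') => n; rewrite geq_max => /andP [h1 h2] i.
    rewrite ltnS leq_eqVlt => /orP [/eqP ->|hi]; first exact: e.
    exact: IH.
  have [N HN] := allg M.+1.
  exists (maxn N M) => n; rewrite geq_max => /andP [h1 h2].
  rewrite /Gs size_prefix.
  have hc : M.+1 <= cnt (Defs.prefix f n) phi n.+1 0.
    apply: cnt_ge; first by rewrite ltnS.
    by move=> i hi; rewrite add0n HN.
  case E: cnt hc => [|k] // hk.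
  rewrite -(HM k) //.
  congr B; apply/eq_in_map => i; rewrite mem_iota add0n => /andP [_ hi].
  have := @cnt_some (Defs.prefix f n) phi n.+1 0 i; rewrite E add0n => /(_ hi).
  case H: holdsp => [w|] // _.
  have [s1 _] := holdsp_good f (phi i).
  by rewrite /fval (s1 _ _ H).
split => Sf.
  case: (HB f) => [[_ e]|[nS _]]; [exact: key | by []].
case: (HB f) => [[sS _]|[_ e]]; [by [] | exact: key].
Qed.

Theorem mainTheorem6 (S : (nat -> nat) -> Prop) : bob_wins S <-> guessable S.
Proof. split; [exact: part2 | exact: part1]. Qed.
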